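(* Let $c_2,e_3,d_4$ be general homogeneous polynomials in $(u,v)$ of degrees $2,3,4$. The quartic surface $$\mathcal{K}\colon\ (w^2-uv)\,y^2 = c_2(u,v)w^2 + e_3(u,v)w + d_4(u,v)$$ in $\mathbb{P}^3=\mathbb{P}(u,v,w,y)$ has two rational double point singularities of type $\mathbf{A}_1$, at $\mathrm{p}_1=[0:0:0:1]$ and $\mathrm{p}_2=[0:0:1:0]$. *)

(* Defs.v *)
From HB Require Import structures.
From mathcomp Require Import all_boot all_order all_algebra.
From mathcomp Require Import mpoly.
Set Implicit Arguments. Unset Strict Implicit. Unset Printing Implicit Defensive.
Import GRing.Theory.
Local Open Scope ring_scope.

Definition U_ {F : fieldType} : {mpoly F[4]} := 'X_(inord 0).
Definition V_ {F : fieldType} : {mpoly F[4]} := 'X_(inord 1).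
Definition W_ {F : fieldType} : {mpoly F[4]} := 'X_(inord 2).
Definition Y_ {F : fieldType} : {mpoly F[4]} := 'X_(inord 3).

(* The 12 coefficients of (c_2, e_3, d_4) are a : 'I_12 -> F:
   c_2 = sum_{k<=2} a_k u^k v^(2-k),
   e_3 = sum_{k<=3} a_(3+k) u^k v^(3-k),
   d_4 = sum_{k<=4} a_(7+k) u^k v^(4-k). *)
Definition binform {F : fieldType} (a : 'I_12 -> F) (off deg : nat) : {mpoly F[4]} :=
  \sum_(k < deg.+1) (a (inord (off + k)))%:MP * U_ ^+ k * V_ ^+ (deg - k).

Definition c2 {F : fieldType} (a : 'I_12 -> F) := binform a 0 2.
Definition e3 {F : fieldType} (a : 'I_12 -> F) := binform a 3 3.
Definition d4 {F : fieldType} (a : 'I_12 -> F) := binform a 7 4.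

Definition Kpoly {F : fieldType} (a : 'I_12 -> F) : {mpoly F[4]} :=
  (W_ ^+ 2 - U_ * V_) * Y_ ^+ 2 - (c2 a * W_ ^+ 2 + e3 a * W_ + d4 a).

(* A point of P^3 is represented by a nonzero vector p : 'I_4 -> F. *)
Definition nonzero_vec {F : fieldType} (p : 'I_4 -> F) := exists i, p i != 0.

Definition same_proj_point {F : fieldType} (p q : 'I_4 -> F) :=
  exists2 l : F, l != 0 & forall i, p i = l * q i.

Definition singular_point {F : fieldType} (G : {mpoly F[4]}) (p : 'I_4 -> F) :=
  nonzero_vec p /\ meval p G = 0 /\ forall i, meval p (mderiv i G) = 0.

(* Rational double point of type A_1 (ordinary node): p is singular and, in an
   affine chart x_i = 1 containing p, the Hessian of the dehomogenized local
   equation at (the representative of) p is nondegenerate.  The second partial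
   derivatives of the dehomogenization in the chart variables x_j (j <> i)
   are the d_j d_k G evaluated at p / p_i. *)
Definition A1_point {F : fieldType} (G : {mpoly F[4]}) (p : 'I_4 -> F) :=
  singular_point G p /\
  exists i : 'I_4, p i != 0 /\
    let q := fun j => p j / p i in
    let H := \matrix_(j < 3, k < 3)
               meval q (mderiv (lift i k) (mderiv (lift i j) G)) in
    \det H != 0.

Definition p1 {F : fieldType} : 'I_4 -> F := fun i => if val i == 3%N then 1 else 0.
Definition p2 {F : fieldType} : 'I_4 -> F := fun i => if val i == 2%N then 1 else 0.

(* Main.v *)
Require Import Defs.
From HB Require Import structures.
From mathcomp Require Import all_boot all_order all_algebra.
From mathcomp Require Import mpoly.
From mathcomp Require Import ring.
Import GRing.Theory.
Local Open Scope ring_scope.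


Lemma mderivXi (F : fieldType) n (l : 'I_n.+1) j : (j <= n)%N ->
  mderiv l ('X_(inord j) : {mpoly F[n.+1]}) = (val l == j)%:R.
Proof.
move=> hj; rewrite mderivX mnm1E.
have -> : (inord j == l) = (val l == j) by rewrite eq_sym -val_eqE /= inordK.
case: eqP => [hl|_]; last by rewrite scale0r.
have -> : (U_(inord j) - U_(l) = 0)%MM.
  by apply/mnmP => k; rewrite mnmBE mnm0E -hl inord_val subnn.
by rewrite mpolyX0 scale1r.
Qed.

Lemma mderiv_nat (F : fieldType) n (l : 'I_n) k :
  mderiv l (k%:R : {mpoly F[n]}) = 0.
Proof. by rewrite -mpolyC_nat mderivC. Qed.

Section S.
Context {F : fieldType} (a : 'I_12 -> F).
Local Notation "'a_' k" := (a (inord k)) (at level 3, k at level 2).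
Definition cF u v := a_ 0 * v^+2 + a_ 1 * u * v + a_ 2 * u^+2.
Definition eF u v := a_ 3 * v^+3 + a_ 4 * u * v^+2 + a_ 5 * u^+2 * v + a_ 6 * u^+3.
Definition dF u v := a_ 7 * v^+4 + a_ 8 * u * v^+3 + a_ 9 * u^+2 * v^+2 + a_ 10 * u^+3 * v + a_ 11 * u^+4.
Definition cuF (u v : F) := a_ 1 * v + 2%:R * a_ 2 * u.
Definition cvF (u v : F) := 2%:R * a_ 0 * v + a_ 1 * u.
Definition euF u v := a_ 4 * v^+2 + 2%:R * a_ 5 * u * v + 3%:R * a_ 6 * u^+2.
Definition evF u v := 3%:R * a_ 3 * v^+2 + 2%:R * a_ 4 * u * v + a_ 5 * u^+2.
Definition duF u v := a_ 8 * v^+3 + 2%:R * a_ 9 * u * v^+2 + 3%:R * a_ 10 * u^+2 * v + 4%:R * a_ 11 * u^+3.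
Definition dvF u v := 4%:R * a_ 7 * v^+3 + 3%:R * a_ 8 * u * v^+2 + 2%:R * a_ 9 * u^+2 * v + a_ 10 * u^+3.
Definition fF u v w := cF u v * w^+2 + eF u v * w + dF u v.
Definition GF u v w y := (w^+2 - u * v) * y^+2 - fF u v w.
Definition gradF u v w y (i : nat) :=
  match i with
  | 0 => - v * y^+2 - (cuF u v * w^+2 + euF u v * w + duF u v)
  | 1 => - u * y^+2 - (cvF u v * w^+2 + evF u v * w + dvF u v)
  | 2 => 2%:R * w * y^+2 - (2%:R * cF u v * w + eF u v)
  | _ => 2%:R * (w^+2 - u * v) * y
  end.
Definition GP (i : nat) : {mpoly F[4]} :=
  let u := U_ in let v := V_ in let w := W_ in let y := Y_ in
  let A k := (a_ k)%:MP in
  match i with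
  | 0 => - v * y^+2 - ((A 1 * v + 2%:R * A 2 * u) * w^+2
          + (A 4 * v^+2 + 2%:R * A 5 * u * v + 3%:R * A 6 * u^+2) * w
          + (A 8 * v^+3 + 2%:R * A 9 * u * v^+2 + 3%:R * A 10 * u^+2 * v + 4%:R * A 11 * u^+3))
  | 1 => - u * y^+2 - ((2%:R * A 0 * v + A 1 * u) * w^+2
          + (3%:R * A 3 * v^+2 + 2%:R * A 4 * u * v + A 5 * u^+2) * w
          + (4%:R * A 7 * v^+3 + 3%:R * A 8 * u * v^+2 + 2%:R * A 9 * u^+2 * v + A 10 * u^+3))
  | 2 => 2%:R * w * y^+2 - (2%:R * (A 0 * v^+2 + A 1 * u * v + A 2 * u^+2) * w
          + (A 3 * v^+3 + A 4 * u * v^+2 + A 5 * u^+2 * v + A 6 * u^+3))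
  | _ => 2%:R * (w^+2 - u * v) * y
  end.
End S.

Ltac kexpand :=
  rewrite /Kpoly /c2 /e3 /d4 /binform !big_ord_recr !big_ord0 /= /addn /subn /= /U_ /V_ /W_ /Y_;
  rewrite ?expr0 ?mulr1 ?add0r; rewrite !exprS ?expr0 ?mulr1.

Ltac kderiv := rewrite !(mderivD, mderivB, mderivN, mderivM, mderiv_nat, mderivC, mderivXi) //=.
Ltac keval := rewrite !(mevalD, mevalB, mevalN, mevalM, mevalC, mevalXU, meval1, meval0, mevalMn).

Lemma evalK (F : fieldType) (a : 'I_12 -> F) (x : 'I_4 -> F) :
  meval x (Kpoly a) = GF a (x (inord 0)) (x (inord 1)) (x (inord 2)) (x (inord 3)).
Proof. kexpand; keval; rewrite /GF /fF /cF /eF /dF; ring. Qed.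

Lemma dK (F : fieldType) (a : 'I_12 -> F) (i : 'I_4) :
  mderiv i (Kpoly a) = GP a (val i).
Proof.
kexpand; kderiv.
case: i => [[|[|[|[|i]]]] Hi] //=; rewrite /GP /U_ /V_ /W_ /Y_; ring.
Qed.

Lemma evalKd (F : fieldType) (a : 'I_12 -> F) (x : 'I_4 -> F) (i : 'I_4) :
  meval x (mderiv i (Kpoly a)) = gradF a (x (inord 0)) (x (inord 1)) (x (inord 2)) (x (inord 3)) (val i).
Proof.
rewrite dK; case: i => [[|[|[|[|i]]]] Hi] //=; rewrite /GP /U_ /V_ /W_ /Y_; keval;
rewrite /gradF /cuF /cvF /euF /evF /duF /dvF /cF /eF /dF; ring.
Qed.


Definition hessF {F : fieldType} (a : 'I_12 -> F) (u v w y : F) (i j : nat) : F :=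
  let a_ k := a (inord k) in
  match i, j with
  | 0, 0 => - (2%:R * a_ 2 * w^+2 + (2%:R * a_ 5 * v + 6%:R * a_ 6 * u) * w
              + (2%:R * a_ 9 * v^+2 + 6%:R * a_ 10 * u * v + 12%:R * a_ 11 * u^+2))
  | 0, 1 | 1, 0 => - y^+2 - (a_ 1 * w^+2 + (2%:R * a_ 4 * v + 2%:R * a_ 5 * u) * w
              + (3%:R * a_ 8 * v^+2 + 4%:R * a_ 9 * u * v + 3%:R * a_ 10 * u^+2))
  | 1, 1 => - (2%:R * a_ 0 * w^+2 + (6%:R * a_ 3 * v + 2%:R * a_ 4 * u) * w
              + (12%:R * a_ 7 * v^+2 + 6%:R * a_ 8 * u * v + 2%:R * a_ 9 * u^+2))
  | 0, 2 | 2, 0 => - (2%:R * cuF a u v * w + euF a u v)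
  | 1, 2 | 2, 1 => - (2%:R * cvF a u v * w + evF a u v)
  | 2, 2 => 2%:R * y^+2 - 2%:R * cF a u v
  | 0, _ | _, 0 => - 2%:R * v * y
  | 1, _ | _, 1 => - 2%:R * u * y
  | 2, _ | _, 2 => 4%:R * w * y
  | _, _ => 2%:R * (w^+2 - u * v)
  end.

Lemma evalKdd (F : fieldType) (a : 'I_12 -> F) (x : 'I_4 -> F) (i j : 'I_4) :
  meval x (mderiv i (mderiv j (Kpoly a))) =
  hessF a (x (inord 0)) (x (inord 1)) (x (inord 2)) (x (inord 3)) (val i) (val j).
Proof.
rewrite dK; case: j => [[|[|[|[|j]]]] Hj] //=; rewrite /GP /U_ /V_ /W_ /Y_ !exprS ?expr0 ?mulr1;
kderiv; keval;
case: i => [[|[|[|[|i]]]] Hi] //=;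
rewrite /cuF /cvF /euF /evF /cF; ring.
Qed.


Lemma my_map_resultant (aR rR : comNzRingType) (f : {rmorphism aR -> rR}) (p q : {poly aR}) :
    f (lead_coef p) != 0 -> f (lead_coef q) != 0 ->
  f (resultant p q)= resultant (map_poly f p) (map_poly f q).
Proof.
move=> nz_fp nz_fq; rewrite /resultant /Sylvester_mx !size_map_poly_id0 //.
rewrite -det_map_mx /= map_col_mx; congr (\det (col_mx _ _));
  by apply: map_lin1_mx => v; rewrite map_poly_rV rmorphM /= map_rVpoly.
Qed.

Lemma res_eval0 (R : comNzRingType) (K : comNzRingType) (f : {rmorphism R -> K})
   (p q : {poly R}) (x : K) :
  (1 < size p)%N -> (1 < size q)%N ->
  (map_poly f p).[x] = 0 -> (map_poly f q).[x] = 0 -> f (resultant p q) = 0.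
Proof.
move=> sp sq hp hq.
have [[u v] /= _ Huv] := resultant_in_ideal sp sq.
have := congr1 (fun P => (map_poly f P).[x]) Huv.
by rewrite /= map_polyC hornerC rmorphD !rmorphM /= hornerD !hornerM hp hq !mulr0 addr0.
Qed.

Lemma res_neq0 (R : comNzRingType) (K : closedFieldType) (f : {rmorphism R -> K})
   (p q : {poly R}) :
  f (lead_coef p) != 0 -> f (lead_coef q) != 0 ->
  (forall x, (map_poly f p).[x] = 0 -> (map_poly f q).[x] = 0 -> False) ->
  resultant p q != 0.
Proof.
move=> lp lq H; apply/negP => /eqP r0.
have := @my_map_resultant _ _ f _ _ lp lq; rewrite r0 rmorph0 => /esym/eqP.
rewrite resultant_eq0 => hg.
have /closed_rootP [x hx] : size (gcdp (map_poly f p) (map_poly f q)) != 1%N.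
  by rewrite neq_ltn hg orbT.
by move: hx; rewrite root_gcd => /andP [/eqP h1 /eqP h2]; apply: (H x).
Qed.

Lemma horner_map_poly (R K : comNzRingType) (f : {rmorphism R -> K}) n E (x : K) :
  (map_poly f (\poly_(i < n) E i)).[x] = \sum_(i < n) f (E i) * x ^+ i.
Proof.
rewrite poly_def rmorph_sum horner_sum; apply: eq_bigr => i _.
rewrite -mul_polyC rmorphM /= map_polyC map_polyXn hornerM hornerC hornerXn. done.
Qed.

Lemma det33 (R : comNzRingType) (A : 'M[R]_3) : \det A =
  A 0 0 * (A 1 1 * A 2 2 - A 1 2 * A 2 1)
  - A 0 1 * (A 1 0 * A 2 2 - A 1 2 * A 2 0)
  + A 0 2 * (A 1 0 * A 2 1 - A 1 1 * A 2 0).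
Proof.
rewrite (expand_det_row _ 0) !big_ord_recr big_ord0 /= /cofactor.
rewrite !(expand_det_row _ 0) !big_ord_recr big_ord0 /= /cofactor !det_mx11 !mxE /=.
rewrite !big_ord0.
pose g (n m : nat) := A (inord n) (inord m).
have H : forall i j, A i j = g i j by move=> i j; rewrite /g !inord_val.
rewrite !H /= /addn /addn_rec /=. ring.
Qed.

Section Coefs.
Context {F : fieldType}.
Definition Ac (k : nat) : {mpoly F[12]} := 'X_(inord k).
Local Notation A := Ac.
Definition DelC (i : nat) : {mpoly F[12]} :=
  match i with
  | 0 => - 4%:R * A 0 * A 7 + A 3 * A 3
  | 1 => - 4%:R * A 0 * A 8 - 4%:R * A 1 * A 7 + 2%:R * A 3 * A 4
  | 2 => - 4%:R * A 0 * A 9 - 4%:R * A 1 * A 8 - 4%:R * A 2 * A 7 + 2%:R * A 3 * A 5 + A 4 * A 4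
  | 3 => - 4%:R * A 0 * A 10 - 4%:R * A 1 * A 9 - 4%:R * A 2 * A 8 + 2%:R * A 3 * A 6 + 2%:R * A 4 * A 5
  | 4 => - 4%:R * A 0 * A 11 - 4%:R * A 1 * A 10 - 4%:R * A 2 * A 9 + 2%:R * A 4 * A 6 + A 5 * A 5
  | 5 => - 4%:R * A 1 * A 11 - 4%:R * A 2 * A 10 + 2%:R * A 5 * A 6
  | _ => - 4%:R * A 2 * A 11 + A 6 * A 6
  end.
Definition DelUC (i : nat) : {mpoly F[12]} :=
  match i with
  | 0 => - 4%:R * A 0 * A 8 - 4%:R * A 1 * A 7 + 2%:R * A 3 * A 4
  | 1 => - 8%:R * A 0 * A 9 - 8%:R * A 1 * A 8 - 8%:R * A 2 * A 7 + 4%:R * A 3 * A 5 + 2%:R * A 4 * A 4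
  | 2 => - 12%:R * A 0 * A 10 - 12%:R * A 1 * A 9 - 12%:R * A 2 * A 8 + 6%:R * A 3 * A 6 + 6%:R * A 4 * A 5
  | 3 => - 16%:R * A 0 * A 11 - 16%:R * A 1 * A 10 - 16%:R * A 2 * A 9 + 8%:R * A 4 * A 6 + 4%:R * A 5 * A 5
  | 4 => - 20%:R * A 1 * A 11 - 20%:R * A 2 * A 10 + 10%:R * A 5 * A 6
  | _ => - 24%:R * A 2 * A 11 + 6%:R * A 6 * A 6
  end.
Definition QC (i : nat) : {mpoly F[12]} :=
  match i with
  | 0 => A 7 | 1 => A 3 | 2 => A 0 + A 8 | 3 => A 4 | 4 => A 1 + A 9
  | 5 => A 5 | 6 => A 2 + A 10 | 7 => A 6 | _ => A 11
  end.
Definition RC (i : nat) : {mpoly F[12]} :=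
  match i with
  | 0 => A 3 | 1 => 2%:R * A 0 + 2%:R * A 8 | 2 => 3%:R * A 4
  | 3 => 4%:R * A 1 + 4%:R * A 9 | 4 => 5%:R * A 5 | 5 => 6%:R * A 2 + 6%:R * A 10
  | 6 => 7%:R * A 6 | _ => 8%:R * A 11
  end.
Definition DelP := \poly_(i < 7) DelC i.
Definition DelUP := \poly_(i < 6) DelUC i.
Definition QP := \poly_(i < 9) QC i.
Definition RP := \poly_(i < 8) RC i.
End Coefs.

Section FDefs.
Context {F : fieldType} (a : 'I_12 -> F).
Definition DelF u v := eF a u v ^+ 2 - 4%:R * cF a u v * dF a u v.
Definition DelUF u v := 2%:R * eF a u v * euF a u v - 4%:R * (cuF a u v * dF a u v + cF a u v * duF a u v).
Definition QF x := fF a (x^+2) 1 x.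
Definition RF x := 2%:R * x * (cuF a (x^+2) 1 * x^+2 + euF a (x^+2) 1 * x + duF a (x^+2) 1)
   + 2%:R * cF a (x^+2) 1 * x + eF a (x^+2) 1.
End FDefs.

Ltac meval12 := rewrite /Ac; rewrite !(mevalD, mevalB, mevalN, mevalM, mevalC, mevalXU, meval1, meval0, mevalMn, mevalMNn).

Ltac hornexp := rewrite /DelP /DelUP /QP /RP horner_map_poly !big_ord_recr !big_ord0 /=.

Lemma evalDel (F : fieldType) (a : 'I_12 -> F) x :
  (map_poly (meval a) (DelP (F:=F))).[x] = DelF a x 1.
Proof.
hornexp; meval12; rewrite /DelF /eF /cF /dF; ring.
Qed.


Lemma evalDelU (F : fieldType) (a : 'I_12 -> F) x :
  (map_poly (meval a) (DelUP (F:=F))).[x] = DelUF a x 1.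
Proof. hornexp; meval12; rewrite /DelUF /eF /cF /dF /euF /cuF /duF; ring. Qed.

Lemma evalQ (F : fieldType) (a : 'I_12 -> F) x :
  (map_poly (meval a) (QP (F:=F))).[x] = QF a x.
Proof. hornexp; meval12; rewrite /QF /fF /eF /cF /dF; ring. Qed.

Lemma evalR (F : fieldType) (a : 'I_12 -> F) x :
  (map_poly (meval a) (RP (F:=F))).[x] = RF a x.
Proof. hornexp; meval12; rewrite /RF /eF /cF /euF /cuF /duF; ring. Qed.

Lemma lead_poly (R : nzRingType) n (E : nat -> R) : (0 < n)%N -> E n.-1 != 0 ->
  lead_coef (\poly_(i < n) E i) = E n.-1.
Proof.
move=> hn hE; rewrite lead_coefE size_poly_eq // coef_poly.
by rewrite prednK // leqnn.
Qed.

Definition wit {F : fieldType} (s : seq F) : 'I_12 -> F := fun i => nth 0 s (val i).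

Lemma witE {F : fieldType} (s : seq F) k : (k < 12)%N -> wit s (inord k) = nth 0 s k.
Proof. by move=> hk; rewrite /wit /= inordK. Qed.

Lemma nz_eval (F : fieldType) (a : 'I_12 -> F) (P : {mpoly F[12]}) : meval a P != 0 -> P != 0.
Proof. by apply: contraNneq => ->; rewrite meval0. Qed.

Section Nonzero.
Variable (F : closedFieldType).
Hypothesis n0 : forall n, (0 < n)%N -> (n%:R : F) != 0.

Definition wD : 'I_12 -> F := wit [:: 1; 0; 0; 0; 0; 0; 1; -1].
Definition wQ : 'I_12 -> F := wit [:: 0; 0; 0; 0; 0; 0; 0; -1; 0; 0; 0; 1].

Lemma wD6 : meval wD (DelC 6) = 1.
Proof. rewrite /DelC; meval12; rewrite /wD !witE //=; ring. Qed.
Lemma wD5 : meval wD (DelUC 5) = 6%:R.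
Proof. rewrite /DelUC; meval12; rewrite /wD !witE //=; ring. Qed.
Lemma wQ8 : meval wQ (QC 8) = 1.
Proof. rewrite /QC; meval12; rewrite /wQ !witE //=. Qed.
Lemma wQ7 : meval wQ (RC 7) = 8%:R.
Proof. rewrite /RC; meval12; rewrite /wQ !witE //=; ring. Qed.

Lemma DelC6_nz : DelC 6 != 0 :> {mpoly F[12]}.
Proof. by apply: (@nz_eval _ wD); rewrite wD6 oner_neq0. Qed.
Lemma DelUC5_nz : DelUC 5 != 0 :> {mpoly F[12]}.
Proof. by apply: (@nz_eval _ wD); rewrite wD5 n0. Qed.
Lemma QC8_nz : QC 8 != 0 :> {mpoly F[12]}.
Proof. by apply: (@nz_eval _ wQ); rewrite wQ8 oner_neq0. Qed.
Lemma RC7_nz : RC 7 != 0 :> {mpoly F[12]}.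
Proof. by apply: (@nz_eval _ wQ); rewrite wQ7 n0. Qed.

Lemma size_DelP : size (DelP (F:=F)) = 7%N.
Proof. by rewrite size_poly_eq // DelC6_nz. Qed.
Lemma size_DelUP : size (DelUP (F:=F)) = 6%N.
Proof. by rewrite size_poly_eq // DelUC5_nz. Qed.
Lemma size_QP : size (QP (F:=F)) = 9%N.
Proof. by rewrite size_poly_eq // QC8_nz. Qed.
Lemma size_RP : size (RP (F:=F)) = 8%N.
Proof. by rewrite size_poly_eq // RC7_nz. Qed.

Lemma resDel_nz : resultant (DelP (F:=F)) DelUP != 0.
Proof.
apply: (@res_neq0 _ _ (meval wD)).
- by rewrite /DelP lead_poly //= ?DelC6_nz // wD6 oner_neq0.
- by rewrite /DelUP lead_poly //= ?DelUC5_nz // wD5 n0.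
move=> x; rewrite evalDel evalDelU /DelF /DelUF /eF /cF /dF /euF /cuF /duF /wD !witE //= => h1 h2.
have h2' : 6%:R * x ^+ 5 = 0 by rewrite -h2; ring.
have x0 : x = 0.
  by move/eqP: h2'; rewrite mulf_eq0 (negbTE (n0 6 isT)) /= expf_eq0 /= => /eqP.
have : (4%:R : F) = 0 by rewrite -h1 x0; ring.
by move/eqP; rewrite (negbTE (n0 4 isT)).
Qed.

Lemma resQ_nz : resultant (QP (F:=F)) RP != 0.
Proof.
apply: (@res_neq0 _ _ (meval wQ)).
- by rewrite /QP lead_poly //= ?QC8_nz // wQ8 oner_neq0.
- by rewrite /RP lead_poly //= ?RC7_nz // wQ7 n0.
move=> x; rewrite evalQ evalR /QF /RF /fF /eF /cF /dF /euF /cuF /duF /wQ !witE //= => h1 h2.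
have h2' : 8%:R * x ^+ 7 = 0 by rewrite -h2; ring.
have x0 : x = 0.
  by move/eqP: h2'; rewrite mulf_eq0 (negbTE (n0 8 isT)) /= expf_eq0 /= => /eqP.
have : (-1 : F) = 0 by rewrite -[RHS]h1 x0; ring.
by move/eqP; rewrite oppr_eq0 oner_eq0.
Qed.
End Nonzero.


Lemma detA1_p1 (F : fieldType) (a : 'I_12 -> F) : (2%:R : F) != 0 ->
    exists i : 'I_4, p1 (F:=F) i != 0 /\
    let q := fun j => p1 j / p1 i in
    let H := \matrix_(j < 3, k < 3)
               meval q (mderiv (lift i k) (mderiv (lift i j) (Kpoly a))) in
    \det H != 0.
Proof.
move=> h2; exists (Ordinal (isT : (3 < 4)%N)); split; first exact: oner_neq0.
move=> q H.
suff -> : \det H = - 2%:R by rewrite oppr_eq0.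
rewrite /H det33 !mxE !evalKdd /= /q /p1 /= !inordK //= !divr1 /cuF /euF /cvF /evF /cF; ring.
Qed.

Lemma detA1_p2 (F : fieldType) (a : 'I_12 -> F) : (2%:R : F) != 0 ->
    a (inord 1) * a (inord 1) - 4%:R * a (inord 0) * a (inord 2) != 0 ->
    exists i : 'I_4, p2 (F:=F) i != 0 /\
    let q := fun j => p2 j / p2 i in
    let H := \matrix_(j < 3, k < 3)
               meval q (mderiv (lift i k) (mderiv (lift i j) (Kpoly a))) in
    \det H != 0.
Proof.
move=> h2 hc; exists (Ordinal (isT : (2 < 4)%N)); split; first exact: oner_neq0.
move=> q H.
suff -> : \det H = - 2%:R * (a (inord 1) * a (inord 1) - 4%:R * a (inord 0) * a (inord 2)).
  by rewrite mulf_neq0 // oppr_eq0.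
rewrite /H det33 !mxE !evalKdd /= /q /p2 /= !inordK //= !divr1 /cuF /euF /cvF /evF /cF; ring.
Qed.

Lemma ord4 (F : Type) (p : 'I_4 -> F) i : p i = p (inord (val i)).
Proof. by rewrite inord_val. Qed.

Lemma sing_pt (F : fieldType) (a : 'I_12 -> F) (p : 'I_4 -> F) :
  p (inord 0) = 0 -> p (inord 1) = 0 ->
  (p (inord 2) = 0 /\ p (inord 3) != 0) \/ (p (inord 3) = 0 /\ p (inord 2) != 0) ->
  singular_point (Kpoly a) p.
Proof.
move=> hu hv h; split; last split.
- by case: h => [[_ h]|[_ h]]; [exists (inord 3) | exists (inord 2)].
- rewrite evalK hu hv; case: h => [[-> _]|[-> _]]; rewrite /GF /fF /cF /eF /dF; ring.
- move=> i; rewrite evalKd hu hv.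
  by case: i => [[|[|[|[|k]]]] hk] //=; case: h => [[-> _]|[-> _]];
    rewrite /cuF /euF /duF /cvF /evF /dvF /cF /eF; ring.
Qed.

Section Fwd.
Variable (F : closedFieldType).
Hypothesis n0 : forall n, (0 < n)%N -> (n%:R : F) != 0.

Lemma fwd (a : 'I_12 -> F) u v w y :
  [|| u != 0, v != 0, w != 0 | y != 0] ->
  GF a u v w y = 0 ->
  (forall k, (k < 4)%N -> gradF a u v w y k = 0) ->
  meval a (DelC 6) != 0 -> a (inord 11) != 0 ->
  meval a (resultant DelP DelUP) != 0 -> meval a (resultant QP RP) != 0 ->
  (u = 0 /\ v = 0 /\ w = 0) \/ (u = 0 /\ v = 0 /\ y = 0).
Proof.
move=> hnz hG hg hl h11 hr1 hr2.
have g0 := hg 0%N isT; have g2 := hg 2%N isT; have g3 := hg 3%N isT.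
have n2 := n0 2 isT.
case: (boolP ((u == 0) && (v == 0))) => [/andP[/eqP u0 /eqP v0] | huv].
  subst u v; move: g3; rewrite /gradF /= => /eqP.
  rewrite !mulf_eq0 (negbTE n2) /= mul0r subr0 expf_eq0 /=.
  by case/orP => /eqP ->; [left|right].
exfalso.
have : (y == 0) || (w^+2 - u * v == 0).
  by move: g3; rewrite /gradF /= => /eqP; rewrite !mulf_eq0 (negbTE n2) /= orbC.
case/orP => [/eqP y0 | /eqP hq].
- subst y.
  have hD : DelF a u v = 0.
    have -> : DelF a u v = gradF a u v w 0 2 ^+ 2 + 4%:R * cF a u v * GF a u v w 0.
      by rewrite /DelF /gradF /GF /fF; ring.
    by rewrite g2 hG; ring.
  have hDu : DelUF a u v = 0.
    have -> : DelUF a u v = - 2%:R * gradF a u v w 0 2 * (2%:R * cuF a u v * w + euF a u v)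
        + 4%:R * cuF a u v * GF a u v w 0 + 4%:R * cF a u v * gradF a u v w 0 0.
      by rewrite /DelUF /gradF /GF /fF; ring.
    by rewrite g2 hG g0; ring.
  case: (eqVneq v 0) => [v0|v0].
    subst v; have u0 : u != 0 by move: huv; rewrite eqxx andbT.
    move: hD; have -> : DelF a u 0 = meval a (DelC 6) * u ^+ 6.
      by rewrite /DelF /DelC; meval12; rewrite /eF /cF /dF; ring.
    by move/eqP; rewrite mulf_eq0 (negbTE hl) expf_eq0 /= (negbTE u0).
  pose x := u / v; have hu : u = x * v by rewrite /x divfK.
  have hx1 : DelF a x 1 = 0.
    have : v ^+ 6 * DelF a x 1 = 0.
      by rewrite -hD [in RHS]hu /DelF /eF /cF /dF; ring.
    by move/eqP; rewrite mulf_eq0 expf_eq0 /= (negbTE v0) => /eqP.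
  have hx2 : DelUF a x 1 = 0.
    have : v ^+ 5 * DelUF a x 1 = 0.
      by rewrite -hDu [in RHS]hu /DelUF /eF /cF /dF /euF /cuF /duF; ring.
    by move/eqP; rewrite mulf_eq0 expf_eq0 /= (negbTE v0) => /eqP.
  have := @res_eval0 _ _ (meval a) DelP DelUP x.
  rewrite (size_DelP F) (@size_DelUP F n0) evalDel evalDelU => /(_ isT isT hx1 hx2).
  by move/eqP; rewrite (negbTE hr1).
- case: (eqVneq v 0) => [v0|v0].
    subst v.
    have w0 : w = 0.
      by move/eqP: hq; rewrite mulr0 subr0 expf_eq0 /= => /eqP.
    subst w; have u0 : u != 0 by move: huv; rewrite eqxx andbT.
    move: hG; have -> : GF a u 0 0 y = - (a (inord 11) * u ^+ 4).
      by rewrite /GF /fF /cF /eF /dF; ring.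
    by move/eqP; rewrite oppr_eq0 mulf_eq0 (negbTE h11) expf_eq0 /= (negbTE u0).
  pose x := w / v; have hw : w = x * v by rewrite /x divfK.
  have hu : u = x ^+ 2 * v.
    have hwu : w ^+ 2 = u * v by apply/eqP; rewrite -subr_eq0 hq.
    by apply: (mulIf v0); rewrite -hwu hw; ring.
  have hQ : QF a x = 0.
    have : v ^+ 4 * QF a x = - GF a u v w y.
      by rewrite hu hw /QF /GF /fF /cF /eF /dF; ring.
    by rewrite hG oppr0 => /eqP; rewrite mulf_eq0 expf_eq0 /= (negbTE v0) => /eqP.
  have hR : RF a x = 0.
    have : v ^+ 3 * RF a x = - 2%:R * x * gradF a u v w y 0 - gradF a u v w y 2.
      by rewrite hu hw /RF /gradF /cuF /euF /duF /cF /eF; ring.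
    rewrite g0 g2 mulr0 subr0 => /eqP.
    by rewrite mulf_eq0 expf_eq0 /= (negbTE v0) => /eqP.
  have := @res_eval0 _ _ (meval a) QP RP x.
  rewrite (size_QP F) (@size_RP F n0) evalQ evalR => /(_ isT isT hQ hR).
  by move/eqP; rewrite (negbTE hr2).
Qed.
End Fwd.


Theorem lemma4p5 (F : closedFieldType) (charF0 : [pchar F] =i pred0) :
  exists2 D : {mpoly F[12]}, D != 0 &
    forall a : 'I_12 -> F, meval a D != 0 ->
      (forall p : 'I_4 -> F, singular_point (Kpoly a) p <->
         (same_proj_point p p1 \/ same_proj_point p p2)) /\
      A1_point (Kpoly a) p1 /\ A1_point (Kpoly a) p2.
Proof.
have n0 : forall n, (0 < n)%N -> (n%:R : F) != 0.
  by move=> n hn; rewrite ((pcharf0P F).1 charF0) -lt0n.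
pose Dc : {mpoly F[12]} := Ac 1 * Ac 1 - 4%:R * Ac 0 * Ac 2.
exists (Dc * DelC 6 * Ac 11 * resultant DelP DelUP * resultant QP RP).
  rewrite !mulf_neq0 //.
  - have h : meval (wit [:: 0; 1]) Dc = 1 by rewrite /Dc; meval12; rewrite !witE //=; ring.
    by apply: (@nz_eval _ (wit [:: 0; 1])); rewrite h oner_neq0.
  - exact: DelC6_nz.
  - exact: QC8_nz.
  - exact: resDel_nz.
  - exact: resQ_nz.
move=> a; rewrite !mevalM !mulf_eq0 !negb_or => /andP[/andP[/andP[/andP[hc hl] h11] hr1] hr2].
have {}h11 : a (inord 11) != 0 by move: h11; rewrite /Ac mevalXU.
have {}hc : a (inord 1) * a (inord 1) - 4%:R * a (inord 0) * a (inord 2) != 0.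
  by move: hc; rewrite /Dc; meval12.
have sp1 : singular_point (Kpoly a) p1.
  apply: sing_pt; rewrite /p1 /= ?inordK //=; left; split=> //; exact: oner_neq0.
have sp2 : singular_point (Kpoly a) p2.
  apply: sing_pt; rewrite /p2 /= ?inordK //=; right; split=> //; exact: oner_neq0.
split; last split.
- move=> p; split.
  + case=> hnz [hG hd].
    have hnz' : [|| p (inord 0) != 0, p (inord 1) != 0, p (inord 2) != 0 | p (inord 3) != 0].
      case: hnz => -[[|[|[|[|k]]]] hk] //= hp; move: hp; rewrite (@ord4 _ p) /= => ->; by rewrite ?orbT.
    rewrite evalK in hG.
    have hg : forall k, (k < 4)%N -> gradF a (p (inord 0)) (p (inord 1)) (p (inord 2)) (p (inord 3)) k = 0.
      by move=> k hk; have := hd (inord k); rewrite evalKd /= inordK.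
    case: (@fwd F n0 _ _ _ _ _ hnz' hG hg hl h11 hr1 hr2) => [[u0 [v0 w0]]|[u0 [v0 y0]]]; [left|right].
    * exists (p (inord 3)); first by move: hnz'; rewrite u0 v0 w0 eqxx.
      move=> i; rewrite (@ord4 _ p i) /p1; case: i => [[|[|[|[|k]]]] hk] //=;
        by rewrite ?u0 ?v0 ?w0 ?mulr0 ?mulr1.
    * exists (p (inord 2)); first by move: hnz'; rewrite u0 v0 y0 eqxx /= orbF.
      move=> i; rewrite (@ord4 _ p i) /p2; case: i => [[|[|[|[|k]]]] hk] //=;
        by rewrite ?u0 ?v0 ?y0 ?mulr0 ?mulr1.
  + case=> -[l hl0 hp]; apply: sing_pt; rewrite ?hp /p1 /p2 /= ?inordK //= ?mulr0 //.
    * by left; rewrite mulr1; split.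
    * by right; rewrite mulr1; split.
- by split=> //; apply: detA1_p1 (n0 2 isT).
- by split=> //; apply: detA1_p2 (n0 2 isT) hc.
Qed.
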